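(* Let $G$ be a road network with arterial dimension $\lambda$, and let $i\in[1,h]$. For every positive integer $\alpha$, every $\alpha\times\alpha$-cell region of the grid $R_i$ contains $O(\alpha^2\lambda)$ level-$i$ nodes (with the hidden constant independent of $\alpha$, $\lambda$, $i$ and $G$).
   Context: A road network $G$ is a directed, connected graph of bounded degree with $n$ nodes, each located at a point of the plane, each edge having a positive length; path length is the sum of edge lengths. Standing assumption: in every $4\times4$-cell region considered, no two distinct local shortest paths have the same endpoints and same length. For a square grid, an $a\times a$-cell region is a square block of $a\times a$ consecutive cells. For a $4\times4$-cell region $B$: its west/east (north/south) strips are its outermost columns (rows) of cells; its vertical (horizontal) bisector is the line halving it vertically (horizontally). A path is a local path in $B$ if at most one of its edges (as a straight segment) intersects the boundary of $B$; a local shortest path in $B$ is shorter than every other local path in $B$ with the same endpoints. A spanning path of $B$ is a local shortest path of $B$ whose endpoints lie on different sides of a bisector $l_b$ of $B$, neither lying in a cell adjacent to $l_b$; an edge of it intersecting $l_b$ is an arterial edge of $B$. The arterial dimension $\lambda$ of $G$ is the maximum number of arterial edges of any $4\times4$-cell region of any square grid. Grids: $R_h$ is a $4\times4$-cell grid tightly covering all nodes; each cell is recursively split into $2\times2$ cells until each cell contains at most one node, giving $h$ grids, with $R_i$ having $2^{h+2-i}\times2^{h+2-i}$ cells ($i\in[1,h]$). Levels: let $A_i$ be the set of edges that are arterial edges of some $4\times4$-cell region of $R_i$. An edge is a level-$i$ edge if it lies in $A_i$ but in none of $A_{i+1},\dots,A_h$; it is a level-$0$ edge if it lies in no $A_i$.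 A node $v$ is a level-$i$ node if it is an endpoint of some level-$i$ edge but of no edge of level $i+1,\dots,h$. *)

(* Defs.v *)
From HB Require Import structures.
From mathcomp Require Import all_boot all_order all_algebra.
From mathcomp Require Import boolp reals.
Set Implicit Arguments. Unset Strict Implicit. Unset Printing Implicit Defensive.
Import Order.TTheory GRing.Theory Num.Theory.
Local Open Scope ring_scope.

Section RoadNetwork.
Variable R : realType.
Variable V : finType.
Variable E : rel V.
Variable len : V -> V -> R.
Variable pos : V -> R * R.

Definition in_square (x y w : R) (p : R * R) : bool :=
  (x <= p.1 <= x + w) && (y <= p.2 <= y + w).

Definition on_square_boundary (x y w : R) (p : R * R) : bool :=
  in_square x y w p &&
  [|| p.1 == x, p.1 == x + w, p.2 == y | p.2 == y + w].

Definition seg_point (p q : R * R) (t : R) : R * R :=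
  ((1 - t) * p.1 + t * q.1, (1 - t) * p.2 + t * q.2).

Definition edge_meets_boundary (x y w : R) (u v : V) : Prop :=
  exists t : R, 0 <= t <= 1 /\ on_square_boundary x y w (seg_point (pos u) (pos v) t).

(* A 4x4-cell region of a (axis-parallel) square grid with cell side c:
   the square [x, x+4c] x [y, y+4c], made of the cells (j,l), j,l < 4. *)
Record region := Region { rx : R; ry : R; rc : R }.

Definition in_region (B : region) (p : R * R) : bool :=
  in_square (rx B) (ry B) (4%:R * rc B) p.

Definition in_cell (B : region) (j l : nat) (p : R * R) : bool :=
  in_square (rx B + j%:R * rc B) (ry B + l%:R * rc B) (rc B) p.

(* A path is a node x followed by a sequence p with path E x p;
   its edges are the consecutive pairs. *)
Definition path_edges (x : V) (p : seq V) : seq (V * V) := zip (x :: p) p.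

Definition path_len (x : V) (p : seq V) : R :=
  \sum_(e <- path_edges x p) len e.1 e.2.

Definition local_path (B : region) (x : V) (p : seq V) : Prop :=
  path E x p /\
  (count (fun e => `[< edge_meets_boundary (rx B) (ry B) (4%:R * rc B) e.1 e.2 >])
         (path_edges x p) <= 1)%N.

Definition local_shortest_path (B : region) (x : V) (p : seq V) : Prop :=
  local_path B x p /\
  forall q : seq V, local_path B x q -> last x q = last x p -> q <> p ->
    path_len x p < path_len x q.

(* bisectors: vert = true is the vertical bisector x = rx + 2c,
   vert = false the horizontal bisector y = ry + 2c *)
Definition bis_coord (vert : bool) (p : R * R) : R := if vert then p.1 else p.2.
Definition bis_value (B : region) (vert : bool) : R :=
  (if vert then rx B else ry B) + 2%:R * rc B.

Definition in_cell_adjacent_to_bisector (B : region) (vert : bool) (p : R * R) : Prop :=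
  exists j l : nat, (j < 4)%N /\ (l < 4)%N /\
    (if vert then (j == 1)%N || (j == 2)%N else (l == 1)%N || (l == 2)%N) /\
    in_cell B j l p.

Definition spanning_path (B : region) (vert : bool) (x : V) (p : seq V) : Prop :=
  let u := pos x in let w := pos (last x p) in
  local_shortest_path B x p /\
  in_region B u /\ in_region B w /\
  ((bis_coord vert u < bis_value B vert < bis_coord vert w) \/
   (bis_coord vert w < bis_value B vert < bis_coord vert u)) /\
  ~ in_cell_adjacent_to_bisector B vert u /\
  ~ in_cell_adjacent_to_bisector B vert w.

Definition arterial_edge (B : region) (e : V * V) : Prop :=
  exists (vert : bool) (x : V) (p : seq V),
    spanning_path B vert x p /\ e \in path_edges x p /\
    exists t : R, 0 <= t <= 1 /\
      bis_coord vert (seg_point (pos e.1) (pos e.2) t) = bis_value B vert.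

Definition arterial_edges (B : region) : {set V * V} :=
  [set e | `[< arterial_edge B e >]].

Definition arterial_dimension (lambda : nat) : Prop :=
  (forall B : region, 0 < rc B -> (#|arterial_edges B| <= lambda)%N) /\
  (exists B : region, 0 < rc B /\ #|arterial_edges B| = lambda).

Definition road_network : Prop :=
  (forall u v : V, connect (fun a b => E a b || E b a) u v) /\
  (forall u v : V, E u v -> 0 < len u v) /\
  (forall (B : region) (x : V) (p q : seq V),
     local_shortest_path B x p -> local_shortest_path B x q ->
     last x p = last x q -> path_len x p = path_len x q -> p = q).

Definition tight_square (x0 y0 s : R) : Prop :=
  (forall v : V, in_square x0 y0 s (pos v)) /\
  (exists v : V, (pos v).1 = x0) /\ (exists v : V, (pos v).2 = y0) /\
  (exists v : V, (pos v).1 = x0 + s \/ (pos v).2 = y0 + s).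

Definition grid_region (x0 y0 s : R) (k a b : nat) : region :=
  Region (x0 + a%:R * (s / k%:R)) (y0 + b%:R * (s / k%:R)) (s / k%:R).

Definition at_most_one_node_per_cell (x0 y0 s : R) (k : nat) : Prop :=
  forall a b : nat, (a < k)%N -> (b < k)%N -> forall u v : V,
    in_cell (grid_region x0 y0 s k a b) 0 0 (pos u) ->
    in_cell (grid_region x0 y0 s k a b) 0 0 (pos v) -> u = v.

(* h = number of grids: R_h has 4x4 cells, and cells are split into 2x2
   until each cell contains at most one node; R_i has 2^(h+2-i) cells per side,
   so the finest grid R_1 has 2^(h+1) cells per side. *)
Definition grid_count (x0 y0 s : R) (h : nat) : Prop :=
  (1 <= h)%N /\ at_most_one_node_per_cell x0 y0 s (2 ^ h.+1) /\
  forall h', (1 <= h')%N -> (h' < h)%N -> ~ at_most_one_node_per_cell x0 y0 s (2 ^ h'.+1).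

Definition cells (h i : nat) : nat := 2 ^ (h + 2 - i).

Definition in_A (x0 y0 s : R) (h i : nat) (e : V * V) : Prop :=
  exists a b : nat, (a + 4 <= cells h i)%N /\ (b + 4 <= cells h i)%N /\
    arterial_edge (grid_region x0 y0 s (cells h i) a b) e.

Definition level_edge (x0 y0 s : R) (h i : nat) (e : V * V) : Prop :=
  in_A x0 y0 s h i e /\ forall j, (i < j <= h)%N -> ~ in_A x0 y0 s h j e.

Definition level_node (x0 y0 s : R) (h i : nat) (v : V) : Prop :=
  (exists e, level_edge x0 y0 s h i e /\ (e.1 = v \/ e.2 = v)) /\
  forall j, (i < j <= h)%N -> forall e, level_edge x0 y0 s h j e -> e.1 <> v /\ e.2 <> v.

Definition level_nodes_in (x0 y0 s : R) (h i alpha a b : nat) : {set V} :=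
  [set v | `[< level_node x0 y0 s h i v /\
     in_square (x0 + a%:R * (s / (cells h i)%:R)) (y0 + b%:R * (s / (cells h i)%:R))
               (alpha%:R * (s / (cells h i)%:R)) (pos v) >]].

End RoadNetwork.

(* Main.v *)
Require Import Defs.
From HB Require Import structures.
From mathcomp Require Import all_boot all_order all_algebra.
From mathcomp Require Import boolp reals.
From mathcomp Require Import lra zify ring.
Set Implicit Arguments. Unset Strict Implicit. Unset Printing Implicit Defensive.
Import Order.TTheory GRing.Theory Num.Theory.

Module Aux.
Local Open Scope ring_scope.
Section G.
Variable R : realType.

Lemma clip1 (a w P Q : R) : a <= P <= a + w -> exists T, 0 <= T <= 1 /\
  (forall t, 0 <= t <= T -> a <= (1-t)*P + t*Q <= a+w) /\
  (T < 1 -> ((1-T)*P + T*Q == a) || ((1-T)*P + T*Q == a + w)).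
Proof.
move=> /andP[h1 h2].
have [hQ1|hQ1] := lerP a Q; last first.
  have d0 : 0 < P - Q by lra.
  exists ((P - a)/(P - Q)).
  have eT : (P - a)/(P - Q) * (P - Q) = P - a by rewrite divfK // gt_eqF.
  set T := (P - a)/(P - Q) in eT *.
  have T0 : 0 <= T by nra.
  have T1 : T <= 1 by nra.
  split; first by rewrite T0 T1.
  split.
    move=> t /andP[t0 tT]. have : t * (P - Q) <= T * (P - Q) by nra.
    move=> H. apply/andP; split; nra.
  by move=> _; apply/orP; left; apply/eqP; nra.
have [hQ2|hQ2] := lerP Q (a + w).
  exists 1; split; first by rewrite ler01 lexx.
  split; last by rewrite ltxx.
  move=> t /andP[t0 t1]; apply/andP; split; nra.
have d0 : 0 < Q - P by lra.
exists ((a + w - P)/(Q - P)).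
have eT : (a + w - P)/(Q - P) * (Q - P) = a + w - P by rewrite divfK // gt_eqF.
set T := (a + w - P)/(Q - P) in eT *.
have T0 : 0 <= T by nra.
have T1 : T <= 1 by nra.
split; first by rewrite T0 T1.
split.
  move=> t /andP[t0 tT]. have : t * (Q - P) <= T * (Q - P) by nra.
  move=> H. apply/andP; split; nra.
by move=> _; apply/orP; right; apply/eqP; nra.
Qed.


Lemma seg_exit (x y w : R) (p q : R * R) : in_square x y w p -> ~~ in_square x y w q ->
  exists t, 0 <= t <= 1 /\ on_square_boundary x y w (seg_point p q t).
Proof.
rewrite /in_square => /andP[hx hy] hq.
have [T1 [/andP[T10 T11] [F1 B1]]] := clip1 q.1 hx.
have [T2 [/andP[T20 T21] [F2 B2]]] := clip1 q.2 hy.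
have q1 : forall t, t = 1 -> (1-t) * p.1 + t*q.1 = q.1 by move=> t ->; lra.
have q2 : forall t, t = 1 -> (1-t) * p.2 + t*q.2 = q.2 by move=> t ->; lra.
have [le12|lt21] := lerP T1 T2.
  exists T1; split; first by rewrite T10 T11.
  rewrite /on_square_boundary /in_square /seg_point /=.
  rewrite F1 ?lexx ?T10 //= F2 ?le12 ?T10 //=.
  have [lt1|] := ltrP T1 1.
    by case/orP: (B1 lt1) => ->; rewrite ?orbT.
  move=> ge1; have e1 : T1 = 1 by lra. have e2 : T2 = 1 by lra.
  exfalso; move/negP: hq; apply.
  have := F1 1; have := F2 1; rewrite q1 // q2 // e1 e2 ler01 lexx => -> //.
  by move=> ->.
exists T2; split; first by rewrite T20 T21.
rewrite /on_square_boundary /in_square /seg_point /=.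
rewrite F1 ?(ltW lt21) ?T20 //= F2 ?lexx ?T20 //=.
have lt1 : T2 < 1 by lra.
by case/orP: (B2 lt1) => ->; rewrite ?orbT.
Qed.

End G.
Section P.
Variable R : realType.
Variable V : finType.
Variable pos : V -> R * R.
Variables (x0 y0 w : R).

Let Qin (v : V) := in_square x0 y0 w (pos v).
Let bnd (e : V * V) := `[< edge_meets_boundary pos x0 y0 w e.1 e.2 >].

Lemma meet_out u v : Qin u -> ~~ Qin v -> bnd (u, v).
Proof.
move=> hu hv; apply/asboolP; exact: seg_exit.
Qed.

Lemma meet_in u v : ~~ Qin u -> Qin v -> bnd (u, v).
Proof.
move=> hu hv; apply/asboolP.
have [t [/andP[t0 t1] H]] := seg_exit hv hu.
exists (1 - t); split; first by apply/andP; split; lra.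
suff -> : seg_point (pos u) (pos v) (1 - t) = seg_point (pos v) (pos u) t by [].
rewrite /seg_point; congr (_, _); ring.
Qed.

Lemma L1 (x : V) p : ~~ Qin x -> Qin (last x p) -> (0 < count bnd (path_edges x p))%N.
Proof.
elim: p x => [|y p IH] x /= hx hl; first by rewrite hl in hx.
rewrite /path_edges /=.
case: (boolP (Qin y)) => hy; first by rewrite meet_in.
have := IH y hy hl; rewrite /path_edges; lia.
Qed.

Lemma L2 (x : V) p z : Qin x -> Qin (last x p) -> z \in x :: p -> ~~ Qin z ->
  (1 < count bnd (path_edges x p))%N.
Proof.
elim: p x => [|y p IH] x /= hx hl hz hnz.
  by move: hz; rewrite inE => /eqP ez; subst z; rewrite hx in hnz.
rewrite /path_edges /=.
case: (boolP (Qin y)) => hy.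
  have hz' : z \in y :: p.
    move: hz; rewrite inE => /orP[/eqP ez|//]; subst z; by rewrite hx in hnz.
  have := IH y hy hl hz' hnz; rewrite /path_edges; lia.
rewrite meet_out //.
have := L1 hy hl; rewrite /path_edges /=; lia.
Qed.

Lemma all_in (x : V) p : (count bnd (path_edges x p) <= 1)%N -> Qin x -> Qin (last x p) ->
  forall z, z \in x :: p -> Qin z.
Proof.
move=> hc hx hl z hz; apply/negPn/negP => hnz.
have := L2 hx hl hz hnz; lia.
Qed.

End P.

Lemma mem_zip' (T : eqType) (s t : seq T) u v : (u, v) \in zip s t -> u \in s /\ v \in t.
Proof.
elim: s t => [|a s IH] [|b t] //=.
rewrite inE => /orP[/eqP [-> ->]|/IH [h1 h2]]; first by rewrite !inE !eqxx.
by rewrite !inE h1 h2 !orbT.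
Qed.

Lemma card_bigcup_leq (T : finType) (I : Type) (r : seq I) (A : I -> {set T}) :
  (#|\bigcup_(i <- r) A i| <= \sum_(i <- r) #|A i|)%N.
Proof.
elim: r => [|i r IH]; first by rewrite !big_nil cards0.
rewrite !big_cons; apply: leq_trans (leq_card_setU _ _).1 _.
by rewrite leq_add2l.
Qed.
End Aux.
Import Aux.
Theorem lemma1 :
  exists C : nat,
  forall (R : realType) (V : finType) (E : rel V) (len : V -> V -> R) (pos : V -> R * R),
  road_network E len pos ->
  forall lambda : nat, arterial_dimension E len pos lambda ->
  forall (x0 y0 s : R) (h : nat),
  tight_square pos x0 y0 s -> grid_count pos x0 y0 s h ->
  forall i : nat, (1 <= i <= h)%N ->
  forall alpha : nat, (0 < alpha)%N ->
  forall a b : nat, (a + alpha <= cells h i)%N -> (b + alpha <= cells h i)%N ->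
  (#|level_nodes_in E len pos x0 y0 s h i alpha a b| <= C * alpha ^ 2 * lambda)%N.
Proof.
exists 72%N => R V E len pos _ lambda [lamb _] x0 y0 s h [tight _] _ i _ alpha alpha0 a b _ _.
set k := cells h i.
set c : R := (s / k%:R)%R.
have k0 : (0 < k)%N by rewrite /k /cells expn_gt0.
set reg := fun a' b' => grid_region x0 y0 s k a' b'.
set Endpt := fun a' b' => [set e.1 | e in arterial_edges E len pos (reg a' b')] :|:
                          [set e.2 | e in arterial_edges E len pos (reg a' b')].
set n := (alpha + 5)%N.
set U := level_nodes_in E len pos x0 y0 s h i alpha a b.
have key : forall v, v \in U -> (0 < c)%R /\
   exists a' b', [/\ (a' <= a + alpha)%N, (a <= a' + 4)%N, (b' <= b + alpha)%N,
     (b <= b' + 4)%N & v \in Endpt a' b'].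
  move=> v; rewrite inE => /asboolP [[[e [[[a' [b' [_ [_ art]]]] _] hev]] _] hsq].
  have art' := art.
  case: art => vert [x [p [[[[lp hc] _] [hu [hw [hbis _]]]] [hep _]]]].
  have eA : e = (e.1, e.2) by case: e {art' hev hep}.
  rewrite eA in hep; have [he1 he2] := mem_zip' hep.
  have allin := all_in hc hu hw.
  have hv : in_region (reg a' b') (pos v).
    case: hev => <-; [exact: (allin _ he1) | apply: allin; by rewrite inE he2 orbT].
  have s0 : (0 < s)%R.
    have tu := tight x; have tw := tight (last x p).
    move: tu tw hbis; rewrite /in_square /bis_coord /bis_value => tu tw hbis.
    case: vert hbis => hbis; move: tu tw; move=> /andP[/andP[? ?] /andP[? ?]] /andP[/andP[? ?] /andP[? ?]]; case: hbis => /andP[? ?]; lra.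
  have c0 : (0 < c)%R by rewrite /c divr_gt0 // ltr0n.
  split=> //.
  exists a', b'; move: hv hsq.
  rewrite /in_region /reg /grid_region /in_square /= -/c.
  move=> /andP[/andP[h1 h2] /andP[h3 h4]] /andP[/andP[g1 g2] /andP[g3 g4]].
  have r1 : ((a'%:R : R) <= (a + alpha)%:R)%R by rewrite natrD; nra.
  have r2 : ((a%:R : R) <= (a' + 4)%:R)%R by rewrite natrD; nra.
  have r3 : ((b'%:R : R) <= (b + alpha)%:R)%R by rewrite natrD; nra.
  have r4 : ((b%:R : R) <= (b' + 4)%:R)%R by rewrite natrD; nra.
  rewrite ler_nat in r1; rewrite ler_nat in r2; rewrite ler_nat in r3; rewrite ler_nat in r4.
  split=> //.
  rewrite /Endpt; case: hev => <-; apply/setUP; [left|right];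
    apply/imsetP; exists e => //; rewrite inE; apply/asboolP; exact: art'.
case: (boolP (U == set0)) => [/eqP ->|/set0Pn [v0 hv0]]; first by rewrite cards0.
have c0 := (key v0 hv0).1.
have sub : U \subset \bigcup_(i0 < n) \bigcup_(j0 < n) Endpt ((a - 4) + i0)%N ((b - 4) + j0)%N.
  apply/subsetP => v hv.
  have [_ [a' [b' [r1 r2 r3 r4 hin]]]] := key v hv.
  have li : (a' - (a - 4) < n)%N by rewrite /n; lia.
  have lj : (b' - (b - 4) < n)%N by rewrite /n; lia.
  apply/bigcupP; exists (Ordinal li) => //.
  apply/bigcupP; exists (Ordinal lj) => //=.
  have -> : (a - 4 + (a' - (a - 4)))%N = a' by lia.
  by have -> : (b - 4 + (b' - (b - 4)))%N = b' by lia.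
have cardE : forall a' b', (#|Endpt a' b'| <= 2 * lambda)%N.
  move=> a' b'; apply: leq_trans (leq_card_setU _ _).1 _.
  have hl : (#|arterial_edges E len pos (reg a' b')| <= lambda)%N by apply: lamb.
  apply: leq_trans (leq_add (leq_imset_card _ _) (leq_imset_card _ _)) _.
  by rewrite mul2n -addnn; apply: leq_add.
apply: leq_trans (subset_leq_card sub) _.
apply: leq_trans (card_bigcup_leq _ _) _.
apply: (@leq_trans (\sum_(i0 < n) \sum_(j0 < n) 2 * lambda)%N).
  apply: leq_sum => i0 _; apply: leq_trans (card_bigcup_leq _ _) _.
  by apply: leq_sum => j0 _; apply: cardE.
rewrite !sum_nat_const !card_ord /n.
nia.
Qed.
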